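(* For $a\in\mathbb{R}$, let the polynomials $H_m(z,a)$ in $z$ be defined by $\sum_{m\ge0}H_m(z,a)t^m=\frac{1}{1+t+at^2+zt^3}$, and let $I_a=\left(-\infty,\frac{-2+9a-2\sqrt{(1-3a)^3}}{27}\right]$. Let $S$ be a dense subset of $[-1,1/3]$ and fix $m\in\mathbb{N}$. If $\mathcal{Z}(H_m(z,a))\subseteq I_a$ for all $a\in S$, then $\mathcal{Z}(H_m(z,a^* ))\subseteq I_{a^*}$ for all $a^*\in[-1,1/3]$.
   Context: $\mathcal{Z}(H_m(z,a))$ denotes the set of zeros in $z$ of the polynomial $H_m(z,a)$. *)

(* Defs.v *)
From HB Require Import structures.
From mathcomp Require Import all_boot all_order all_algebra.
From mathcomp Require Import reals.
From mathcomp Require Import complex.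
Set Implicit Arguments. Unset Strict Implicit. Unset Printing Implicit Defensive.
Import Order.TTheory GRing.Theory Num.Theory.
Local Open Scope ring_scope.

(* Htrip a m = (H_m, H_{m-1}, H_{m-2}) as polynomials in z (H_{-1}=H_{-2}=0),
   from the recurrence H_m + H_{m-1} + a H_{m-2} + z H_{m-3} = [m == 0],
   equivalent to sum_m H_m(z,a) t^m = 1/(1+t+a t^2+z t^3). *)
Fixpoint Htrip (R : realType) (a : R) (m : nat) : {poly R} * {poly R} * {poly R} :=
  match m with
  | 0 => (1, 0, 0)
  | m'.+1 => let: (h0, h1, h2) := Htrip a m' in
             (- h0 - a%:P * h1 - 'X * h2, h0, h1)
  end.

Definition H (R : realType) (m : nat) (a : R) : {poly R} := (Htrip a m).1.1.

Definition Iend (R : realType) (a : R) : R :=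
  (-2 + 9 * a - 2 * Num.sqrt ((1 - 3 * a) ^+ 3)) / 27.

Definition zeros_in_I (R : realType) (m : nat) (a : R) : Prop :=
  forall x : R[i], root (map_poly (fun c : R => (c%:C)%C) (H m a)) x ->
    complex.Im x = 0 /\ complex.Re x <= Iend a.

(* Main.v *)
Require Import Defs.
From HB Require Import structures.
From mathcomp Require Import all_boot all_order all_algebra.
From mathcomp Require Import reals.
From mathcomp Require Import complex.
From mathcomp Require Import ring lra zify.
Import Order.TTheory GRing.Theory Num.Theory.
Set Implicit Arguments. Unset Strict Implicit. Unset Printing Implicit Defensive.
Local Open Scope ring_scope.
Section A.
Variable R : realType.
Lemma Htrip_S (a : R) n : Htrip a n.+1 =
  (- (Htrip a n).1.1 - a%:P * (Htrip a n).1.2 - 'X * (Htrip a n).2,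
   (Htrip a n).1.1, (Htrip a n).1.2).
Proof. by rewrite /=; case: (Htrip a n) => [[h0 h1] h2]. Qed.
Lemma H_rec (a : R) n : H n.+3 a = - H n.+2 a - a%:P * H n.+1 a - 'X * H n a.
Proof. by rewrite /H !Htrip_S /=. Qed.
Lemma H0 (a : R) : H 0 a = 1. Proof. by []. Qed.
Lemma H1 (a : R) : H 1 a = -1. Proof. rewrite /H /=. ring. Qed.
Lemma H2 (a : R) : H 2 a = 1 - a%:P.
Proof. rewrite /H /=. ring. Qed.
Lemma coef_step (a : R) (p q r : {poly R}) i :
  (- p - a%:P * q - 'X * r)`_i.+1 = - p`_i.+1 - a * q`_i.+1 - r`_i.
Proof. by rewrite !coefB coefN coefCM coefXM. Qed.
Lemma size_step (a : R) (p q r : {poly R}) n :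
  (size p <= n.+1)%N -> (size q <= n.+1)%N -> (size r <= n)%N -> (size (- p - a%:P * q - 'X * r)%R <= n.+1)%N.
Proof.
move=> hp hq hr; apply/leq_sizeP => -[|j] // hj.
rewrite coef_step !nth_default ?(leq_trans hp) ?(leq_trans hq) ?(leq_trans hr) //; try lia.
by rewrite !(oppr0, mulr0, subr0).
Qed.
Definition c0 (a : R) (k : nat) : R := (-1)^+k * ((k.+1)%:R * ((k.+2)%:R / 2 - a)).
Definition c1 (k : nat) : R := (-1)^+k.+1 * (k.+1)%:R.
Definition c2 (k : nat) : R := (-1)^+k.

Lemma HA (a : R) k :
  [/\ (size (H (3*k)%N a) <= k.+1)%N, (size (H (3*k)%N.+1 a) <= k.+1)%N &
      (size (H (3*k)%N.+2 a) <= k.+1)%N] /\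
  [/\ (H (3*k)%N a)`_k = c2 k, (H (3*k)%N.+1 a)`_k = c1 k & (H (3*k)%N.+2 a)`_k = c0 a k].
Proof.
elim: k => [|k [[s0 s1 s2] [e0 e1 e2]]].
{   rewrite muln0 H0 H1 H2 -polyCB -polyCN size_poly1 !size_polyC !coefC /c0 /c1 /c2 /=.
  split; split; rewrite ?leq_b1 //. ring. by field. }
have -> : (3 * k.+1 = (3*k)%N.+3)%N by lia.
have E3 := H_rec a (3*k)%N; have E4 := H_rec a (3*k)%N.+1; have E5 := H_rec a (3*k)%N.+2.
have s3 : (size (H (3*k)%N.+3 a) <= k.+2)%N.
  by rewrite E3 size_step // ltnW.
have s4 : (size (H (3*k)%N.+4 a) <= k.+2)%N.
  by rewrite E4 size_step // ltnW.
have s5 : (size (H (3*k)%N.+1.+4 a) <= k.+2)%N.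
  by rewrite E5 size_step // ltnW.
have f3 : (H (3*k)%N.+3 a)`_k.+1 = c2 k.+1.
  by rewrite E3 coef_step (nth_default _ s2) (nth_default _ s1) e0 /c2 exprS; ring.
have f4 : (H (3*k)%N.+4 a)`_k.+1 = c1 k.+1.
  by rewrite E4 coef_step f3 (nth_default _ s2) e1 /c1 /c2 !exprS -!natr1; ring.
have f5 : (H (3*k)%N.+1.+4 a)`_k.+1 = c0 a k.+1.
  by rewrite E5 coef_step f4 f3 e2 /c0 /c1 /c2 !exprS -!natr1; field.
exact: (conj (And3 s3 s4 s5) (And3 f3 f4 f5)).
Qed.
Lemma sgn2 k : ((-1 : R)^+k)^+2 = 1.
Proof. by rewrite exprAC sqrrN !expr1n. Qed.

Lemma H_lead (a : R) m : a <= 1/3 ->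
  size (H m a) = (m %/ 3).+1 /\ 1/4 <= (lead_coef (H m a))^+2.
Proof.
move=> ha.
set k := (m %/ 3)%N.
have [c [sz [ck hc]]] : exists c, (size (H m a) <= k.+1)%N /\ (H m a)`_k = c /\ 1/4 <= c^+2.
  have [[s0 s1 s2] [e0 e1 e2]] := HA a k.
  have Em := divn_eq m 3; have := ltn_pmod m (isT : (0 < 3)%N).
  rewrite -/k in Em; case: (m %% 3)%N Em => [|[|[|j]]] Em // _.
  - have -> : m = (3 * k)%N by lia.
    exists (c2 k); split => //; split => //; rewrite /c2 sgn2; lra.
  - have -> : m = (3 * k).+1%N by lia.
    exists (c1 k); split => //; split => //; rewrite /c1 exprMn sgn2 mul1r.
    have : 1 <= (k.+1)%:R :> R by rewrite ler1n.
    move=> h; nra.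
  - have -> : m = (3 * k).+2%N by lia.
    exists (c0 a k); split => //; split => //; rewrite /c0 exprMn sgn2 mul1r.
    have : 1 <= (k.+1)%:R :> R by rewrite ler1n.
    have : 2 <= (k.+2)%:R :> R by rewrite (ler_nat _ 2).
    move=> h1 h2.
    have hy : 2/3 <= (k.+2)%:R / 2 - a by lra.
    have hp : 2/3 <= (k.+1)%:R * ((k.+2)%:R / 2 - a) by nra.
    nra.
have c0 : c != 0 by apply/eqP => c0; move: hc; rewrite c0; lra.
have szE : size (H m a) = k.+1.
  case: (leqP (size (H m a)) k) => h; last by apply/eqP; rewrite eqn_leq sz h.
  by move: ck; rewrite nth_default // => /eqP; rewrite eq_sym (negbTE c0).
by rewrite lead_coefE szE /= ck.
Qed.
End A.

Section B.
Variable R : realType.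
Lemma ReIm_step (u v w x : R[i]) (c : R) :
  complex.Re (- u - (c%:C)%C * v - x * w) = - complex.Re u - c * complex.Re v - (complex.Re x * complex.Re w - complex.Im x * complex.Im w) /\
  complex.Im (- u - (c%:C)%C * v - x * w) = - complex.Im u - c * complex.Im v - (complex.Re x * complex.Im w + complex.Im x * complex.Re w).
Proof.
case: u => u1 u2; case: v => v1 v2; case: w => w1 w2; case: x => x1 x2 /=.
split; ring.
Qed.
Lemma ReIm_cst (c : R) : complex.Re (c%:C)%C = c /\ complex.Im (c%:C)%C = 0.
Proof. by []. Qed.
Lemma ev_step (x : R[i]) (a : R) (p q r : {poly R}) :
  (map_poly (fun c : R => (c%:C)%C) (- p - a%:P * q - 'X * r)).[x] =
  - (map_poly (fun c : R => (c%:C)%C) p).[x] - (a%:C)%C * (map_poly (fun c : R => (c%:C)%C) q).[x]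
  - x * (map_poly (fun c : R => (c%:C)%C) r).[x].
Proof.
rewrite !rmorphB rmorphN !rmorphM /= map_polyC map_polyX !hornerE.
by [].
Qed.
Definition LipB (f : R -> R) := exists B L : R, forall a b, -1 <= a <= 1 -> -1 <= b <= 1 ->
  `|f a| <= B /\ `|f a - f b| <= L * `|a - b|.

Lemma LipB_ext f g : (forall a, f a = g a) -> LipB f -> LipB g.
Proof.
move=> e [B [L h]]; exists B, L => a b ha hb; rewrite -!e; exact: h.
Qed.
Lemma LipB_cst c : LipB (fun _ => c).
Proof. exists `|c|, 0 => a b _ _; by rewrite subrr normr0 mul0r. Qed.
Lemma LipB_id : LipB id.
Proof.
exists 1, 1 => a b /andP[a1 a2] _; rewrite mul1r; split => //.
by rewrite ler_norml a2 andbT.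
Qed.
Lemma LipB_add f g : LipB f -> LipB g -> LipB (fun a => f a + g a).
Proof.
move=> [B1 [L1 h1]] [B2 [L2 h2]]; exists (B1 + B2), (L1 + L2) => a b ha hb.
have [u1 v1] := h1 a b ha hb; have [u2 v2] := h2 a b ha hb.
split; first by apply: (le_trans (ler_normD _ _)); exact: lerD.
rewrite (_ : _ - _ = (f a - f b) + (g a - g b)); last by ring.
by apply: (le_trans (ler_normD _ _)); rewrite mulrDl; exact: lerD.
Qed.
Lemma LipB_opp f : LipB f -> LipB (fun a => - f a).
Proof.
move=> [B [L h]]; exists B, L => a b ha hb; rewrite normrN -opprD normrN; exact: h.
Qed.
Lemma LipB_mul f g : LipB f -> LipB g -> LipB (fun a => f a * g a).
Proof.
move=> [B1 [L1 h1]] [B2 [L2 h2]]; exists (B1 * B2), (B1 * L2 + B2 * L1) => a b ha hb.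
have [u1 v1] := h1 a b ha hb; have [u2 v2] := h2 a b ha hb.
have [u1' _] := h1 b a hb ha; have [u2' _] := h2 b a hb ha.
have n1 := normr_ge0 (f a); have n2 := normr_ge0 (g b); have n3 := normr_ge0 (g a - g b).
have n4 := normr_ge0 (f a - f b); have n5 := normr_ge0 (a - b).
split; first by rewrite normrM; nra.
rewrite (_ : _ - _ = f a * (g a - g b) + g b * (f a - f b)); last by ring.
apply: (le_trans (ler_normD _ _)); rewrite !normrM; nra.
Qed.
Definition cont_at (f : R -> R) a0 := forall e, 0 < e -> exists2 d, 0 < d &
  forall a, -1 <= a <= 1 -> `|a - a0| < d -> `|f a - f a0| < e.
Lemma LipB_cont f a0 : -1 <= a0 <= 1 -> LipB f -> cont_at f a0.
Proof.
move=> h0 [B [L h]] e he; exists (e / (`|L| + 1)).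
  by apply: divr_gt0 => //; apply: ltr_pwDr.
move=> a ha hd; have [_ v] := h a a0 ha h0.
have nL := normr_ge0 L; have lL := ler_norm L; have nd := normr_ge0 (a - a0).
have pos : 0 < `|L| + 1 by apply: ltr_pwDr.
have : `|a - a0| * (`|L| + 1) < e by rewrite -ltr_pdivlMr.
nra.
Qed.
Lemma cont_add f g a0 : cont_at f a0 -> cont_at g a0 -> cont_at (fun a => f a + g a) a0.
Proof.
move=> hf hg e he.
have he2 : 0 < e/2 by lra.
have [d1 d1p h1] := hf (e/2) he2.
have [d2 d2p h2] := hg (e/2) he2.
exists (Num.min d1 d2); first by rewrite lt_min d1p d2p.
move=> a ha; rewrite lt_min => /andP[l1 l2].
have := h1 a ha l1; have := h2 a ha l2 => u v.
rewrite (_ : _ - _ = (f a - f a0) + (g a - g a0)); last by ring.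
apply: (le_lt_trans (ler_normD _ _)); lra.
Qed.
Lemma cont_scale c f a0 : cont_at f a0 -> cont_at (fun a => c * f a) a0.
Proof.
move=> hf e he.
have pos : 0 < `|c| + 1 by apply: ltr_pwDr.
have [d dp h] := hf (e / (`|c| + 1)) (divr_gt0 he pos).
exists d => // a ha hd; have := h a ha hd.
rewrite ltr_pdivlMr // -mulrBr normrM => u.
have := normr_ge0 c; have := normr_ge0 (f a - f a0); nra.
Qed.
Lemma cont_cst c a0 : cont_at (fun _ => c) a0.
Proof. by move=> e he; exists 1 => // a _ _; rewrite subrr normr0. Qed.
Lemma sqrt_diff0 (x y : R) : 0 <= x -> 0 <= y ->
  (Num.sqrt x - Num.sqrt y)^+2 <= `|x - y|.
Proof.
move=> hx hy; rewrite -{2}(sqr_sqrtr hx) -{2}(sqr_sqrtr hy).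
have p0 := sqrtr_ge0 x; have q0 := sqrtr_ge0 y.
move: (Num.sqrt x) (Num.sqrt y) p0 q0 => p q p0 q0.
case: (lerP q p) => h.
  have hh : 0 <= p - q by rewrite subr_ge0.
  have := mulr_ge0 q0 hh.
  rewrite ger0_norm; rewrite !expr2; nra.
have := mulr_ge0 p0 q0.
rewrite ler0_norm; rewrite !expr2; nra.
Qed.
Lemma sqrt_diff (x y : R) : (Num.sqrt x - Num.sqrt y)^+2 <= `|x - y|.
Proof.
case: (lerP 0 x) => hx; case: (lerP 0 y) => hy.
- exact: sqrt_diff0.
- rewrite (ler0_sqrtr (ltW hy)) subr0 sqr_sqrtr //.
  by apply: le_trans (ler_norm _); lra.
- rewrite (ler0_sqrtr (ltW hx)) sub0r sqrrN sqr_sqrtr // distrC.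
  by apply: le_trans (ler_norm _); lra.
- rewrite (ler0_sqrtr (ltW hx)) (ler0_sqrtr (ltW hy)) subrr expr0n /=. exact: normr_ge0.
Qed.
Lemma cont_sqrt u a0 : cont_at u a0 ->
  cont_at (fun a => Num.sqrt (u a)) a0.
Proof.
move=> hu e he.
have he2 : 0 < e^+2 by apply: exprn_gt0.
have [d dp h] := hu (e^+2) he2.
exists d => // a ha hd; have := h a ha hd.
have := sqrt_diff (u a) (u a0).
rewrite -real_normK ?num_real // => h1 h2.
have := normr_ge0 (Num.sqrt (u a) - Num.sqrt (u a0)).
set s := `|_|; move=> s0.
have : s ^+ 2 < e ^+ 2 by apply: (le_lt_trans h1 h2).
move=> hs; case: (ltrP s e) => // hse; nra.
Qed.
End B.

Section C.
Variable R : realType.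
Definition ev (x : R[i]) (p : {poly R}) := (map_poly (fun c : R => (c%:C)%C) p).[x].
Definition n2 (z : R[i]) : R := complex.Re z ^+ 2 + complex.Im z ^+ 2.

Lemma LipB_sub (f g : R -> R) : LipB f -> LipB g -> LipB (fun a => f a - g a).
Proof. by move=> hf hg; apply: LipB_add => //; apply: LipB_opp. Qed.

Lemma H_LipB3 (x : R[i]) n :
  let Q k := LipB (fun a => complex.Re (ev x (H k a))) /\ LipB (fun a => complex.Im (ev x (H k a))) in
  Q n /\ Q n.+1 /\ Q n.+2.
Proof.
move=> Q; rewrite /Q; elim: n => [|n [[r0 i0] [[r1 i1] [r2 i2]]]].
  have e0 a : ev x (H 0 a) = 1 by rewrite /ev H0 rmorph1 hornerE.
  have e1 a : ev x (H 1 a) = -1.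
  by rewrite /ev H1 rmorphN rmorph1 hornerN hornerC.
  have e2 a : ev x (H 2 a) = 1 - (a%:C)%C by rewrite /ev H2 rmorphB rmorph1 /= map_polyC !hornerE.
  split; [|split]; split.
  - by apply: (LipB_ext (f := fun _ => 1)) => [a|]; [rewrite e0 | apply: LipB_cst].
  - by apply: (LipB_ext (f := fun _ => 0)) => [a|]; [rewrite e0 | apply: LipB_cst].
  - by apply: (LipB_ext (f := fun _ => -1)) => [a|]; [rewrite e1 | apply: LipB_cst].
  - by apply: (LipB_ext (f := fun _ => 0)) => [a|]; [rewrite e1 /= oppr0 | apply: LipB_cst].
  - apply: (LipB_ext (f := fun a => 1 - a)) => [a|]; first by rewrite e2.
    by apply: LipB_sub; [apply: LipB_cst | apply: LipB_id].
  - apply: (LipB_ext (f := fun _ => 0)) => [a|]; last by apply: LipB_cst.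
    by rewrite e2 /= subrr.
have E a : ev x (H n.+3 a) = - ev x (H n.+2 a) - (a%:C)%C * ev x (H n.+1 a) - x * ev x (H n a).
  by rewrite H_rec /ev ev_step.
split; first by split. split; first by split.
split.
- apply: (LipB_ext (f := fun a => - complex.Re (ev x (H n.+2 a)) - a * complex.Re (ev x (H n.+1 a))
     - (complex.Re x * complex.Re (ev x (H n a)) - complex.Im x * complex.Im (ev x (H n a))))).
    by move=> a; rewrite E (ReIm_step _ _ _ _ a).1.
  apply: LipB_sub; [apply: LipB_sub|apply: LipB_sub].
  + exact: LipB_opp.
  + by apply: LipB_mul => //; apply: LipB_id.
  + by apply: LipB_mul => //; apply: LipB_cst.
  + by apply: LipB_mul => //; apply: LipB_cst.
- apply: (LipB_ext (f := fun a => - complex.Im (ev x (H n.+2 a)) - a * complex.Im (ev x (H n.+1 a))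
     - (complex.Re x * complex.Im (ev x (H n a)) + complex.Im x * complex.Re (ev x (H n a))))).
    by move=> a; rewrite E (ReIm_step _ _ _ _ a).2.
  apply: LipB_sub; [apply: LipB_sub|apply: LipB_add].
  + exact: LipB_opp.
  + by apply: LipB_mul => //; apply: LipB_id.
  + by apply: LipB_mul => //; apply: LipB_cst.
  + by apply: LipB_mul => //; apply: LipB_cst.
Qed.
Lemma n2M (u v : R[i]) : n2 (u * v) = n2 u * n2 v.
Proof. by case: u => u1 u2; case: v => v1 v2; rewrite /n2 /=; ring. Qed.
Lemma n2_1 : n2 1 = 1.
Proof. by rewrite /n2 /= expr1n expr0n /= addr0. Qed.
Lemma n2_prod (s : seq R[i]) (f : R[i] -> R[i]) :
  n2 (\prod_(r <- s) f r) = \prod_(r <- s) n2 (f r).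
Proof.
elim: s => [|r s IH]; first by rewrite !big_nil n2_1.
by rewrite !big_cons n2M IH.
Qed.
Lemma n2C (c : R) : n2 (c%:C)%C = c^+2.
Proof. by rewrite /n2 /= expr0n /= addr0. Qed.
Lemma n2_0 : n2 0 = 0.
Proof. by rewrite /n2 /= expr0n /= addr0. Qed.
Lemma n2_sub (x r : R[i]) : complex.Im r = 0 ->
  n2 (x - r) = (complex.Re x - complex.Re r)^+2 + (complex.Im x)^+2.
Proof. by case: x => x1 x2; case: r => r1 r2 /= ->; rewrite /n2 /= subr0. Qed.
Lemma n2_ge0 z : 0 <= n2 z.
Proof. by rewrite /n2 addr_ge0 // sqr_ge0. Qed.
Lemma prod_lb (s : seq R[i]) (g : R[i] -> R) c : 0 <= c ->
  (forall r, r \in s -> c <= g r) -> c ^+ size s <= \prod_(r <- s) g r.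
Proof.
move=> c0; elim: s => [|r s IH] h; first by rewrite big_nil expr0.
rewrite big_cons /= exprS; apply: ler_pM => //; first by apply: exprn_ge0.
  by apply: h; rewrite mem_head.
by apply: IH => r' hr'; apply: h; rewrite in_cons hr' orbT.
Qed.

Lemma LB m (a : R) (x : R[i]) c : a <= 1/3 -> zeros_in_I m a -> 0 <= c ->
  (forall r : R[i], complex.Im r = 0 -> complex.Re r <= Iend a -> c <= n2 (x - r)) ->
  1/4 * c ^+ (m %/ 3) <= n2 (ev x (H m a)).
Proof.
move=> ha hz c0 hc.
have [sz lc] := H_lead m ha.
set p := H m a in sz lc *.
set P := map_poly (fun c : R => (c%:C)%C) p.
have [rs EP] := closed_field_poly_normal P.
have lcP : lead_coef P = ((lead_coef p)%:C)%C by rewrite lead_coef_map.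
have lc0 : lead_coef p != 0 by apply/eqP => e; move: lc; rewrite e; lra.
have lcP0 : lead_coef P != 0 by rewrite lcP; apply/eqP => -[]; apply/eqP.
have szrs : size rs = (m %/ 3)%N.
  have : size P = (m %/ 3).+1 by rewrite size_map_poly.
  by rewrite EP size_scale // size_prod_XsubC => -[].
have roots r : r \in rs -> c <= n2 (x - r).
  move=> hr; have : root P r by rewrite EP rootZ // root_prod_XsubC.
  by move/hz => [h1 h2]; apply: hc.
have := prod_lb c0 roots; rewrite szrs => hp.
rewrite /ev -/P EP hornerZ horner_prod n2M lcP n2C n2_prod.
under eq_bigr do rewrite hornerXsubC.
have := exprn_ge0 (m %/ 3) c0; move: hp lc.
move: (c ^+ _) (lead_coef p ^+ 2) (\prod_(i <- rs) n2 (x - i)) => C A B; nra.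
Qed.
End C.
Lemma cont_at_ext (R : realType) (f g : R -> R) a0 : (forall a, f a = g a) -> cont_at f a0 -> cont_at g a0.
Proof.
move=> e h eps he; have [d dp hd] := h eps he; exists d => // a ha hda.
by rewrite -!e; apply: hd.
Qed.
Lemma LipB_pow (R : realType) (f : R -> R) n : LipB f -> LipB (fun a => f a ^+ n).
Proof.
move=> hf; elim: n => [|n IH].
  by apply: (LipB_ext (f := fun _ => 1)) => [a|]; [rewrite expr0 | apply: LipB_cst].
by apply: (LipB_ext (f := fun a => f a * f a ^+ n)) => [a|]; [rewrite exprS | apply: LipB_mul].
Qed.

Unset Implicit Arguments.
Theorem lemma2p2 (R : realType) (S : R -> Prop) (m : nat)
  (HSsub : forall s, S s -> -1 <= s <= 1 / 3)
  (HSdense : forall x, -1 <= x <= 1 / 3 ->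
     forall e : R, 0 < e -> exists s, S s /\ `|s - x| < e)
  (Hzeros : forall a, S a -> zeros_in_I m a) :
  forall astar : R, -1 <= astar <= 1 / 3 -> zeros_in_I m astar.
Proof.
move=> astar hA' x hx.
have /andP[hA1 hA2] := hA'.
set k := (m %/ 3)%N.
pose F a := n2 (ev x (H m a)).
have hA : -1 <= astar <= 1 by apply/andP; split; lra.
have cF : cont_at F astar.
  apply: LipB_cont => //; have [hr hi] := (H_LipB3 x m).1.
  apply: (LipB_ext (f := fun a => complex.Re (ev x (H m a)) * complex.Re (ev x (H m a))
     + complex.Im (ev x (H m a)) * complex.Im (ev x (H m a)))).
    by move=> a; rewrite /F /n2 !expr2.
  by apply: LipB_add; apply: LipB_mul.
have F0 : F astar = 0.
  by rewrite /F /ev; move: hx; rewrite /root => /eqP ->; exact: n2_0.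
have Fs : forall e, 0 < e -> exists2 d, 0 < d & forall s, S s -> `|s - astar| < d -> F s < e.
  move=> e he; have [d dp hd] := cF e he; exists d => // s Ss hs.
  have /andP[s1 s2] := HSsub s Ss.
  have := hd s _ hs; rewrite F0 subr0 ger0_norm; last exact: n2_ge0.
  by apply; apply/andP; split; lra.
split.
  apply/eqP; apply: contraT => hne.
  have c0 : 0 < complex.Im x ^+ 2 by rewrite lt_def sqr_ge0 sqrf_eq0 hne.
  set c := complex.Im x ^+ 2 in c0.
  have ep : 0 < 1/4 * c ^+ k by apply: mulr_gt0; [lra | apply: exprn_gt0].
  have [d dp hd] := Fs _ ep.
  have [s [Ss hs]] := HSdense astar hA' d dp.
  have /andP[s1 s2] := HSsub s Ss.
  have := LB (m:=m) (x:=x) (c:=c) s2 (Hzeros s Ss) (ltW c0).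
  have := hd s Ss hs.
  have hc : forall r : R[i], complex.Im r = 0 -> complex.Re r <= Iend s -> c <= n2 (x - r).
    move=> r hr _; rewrite n2_sub //; have := sqr_ge0 (complex.Re x - complex.Re r).
    rewrite /c; lra.
  move=> h1 /(_ hc); rewrite -/k -/(F s); lra.
rewrite leNgt; apply/negP => hgt.
set g := complex.Re x - Iend astar.
have gp : 0 < g by rewrite /g subr_gt0.
have cI : cont_at (fun a => Iend a) astar.
  apply: (cont_at_ext (f := fun a => 1/27 * ((-2 + 9*a) + (-2) * Num.sqrt ((1 - 3*a)^+3)))).
    by move=> a; rewrite /Iend; field.
  apply: cont_scale; apply: cont_add.
    apply: LipB_cont => //; apply: LipB_add; first exact: LipB_cst.
    by apply: LipB_mul; [apply: LipB_cst | apply: LipB_id].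
  apply: cont_scale; apply: cont_sqrt; apply: LipB_cont => //; apply: LipB_pow.
  apply: LipB_sub; first exact: LipB_cst.
  by apply: LipB_mul; [apply: LipB_cst | apply: LipB_id].
have g2 : 0 < g / 2 by lra.
have [d2 d2p hd2] := cI _ g2.
set c := (g / 2) ^+ 2.
have c0 : 0 < c by apply: exprn_gt0.
have ep : 0 < 1/4 * c ^+ k by apply: mulr_gt0; [lra | apply: exprn_gt0].
have [d1 d1p hd1] := Fs _ ep.
have dp : 0 < Num.min d1 d2 by rewrite lt_min d1p d2p.
have [s [Ss hs]] := HSdense astar hA' _ dp.
move: hs; rewrite lt_min => /andP[hs1 hs2].
have /andP[s1 s2] := HSsub s Ss.
have hI : Iend s - Iend astar < g / 2.
  apply: le_lt_trans (ler_norm _) _; apply: hd2 => //; apply/andP; split; lra.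
have := LB (m:=m) (x:=x) (c:=c) s2 (Hzeros s Ss) (ltW c0).
have := hd1 s Ss hs1.
have hc : forall r : R[i], complex.Im r = 0 -> complex.Re r <= Iend s -> c <= n2 (x - r).
  move=> r hr hre; rewrite n2_sub //; have := sqr_ge0 (complex.Im x).
  have : g / 2 <= complex.Re x - complex.Re r by rewrite /g in hI *; lra.
  rewrite /c; move: (complex.Re x - complex.Re r) => t ht; nra.
move=> h1 /(_ hc); rewrite -/k -/(F s); lra.
Qed.
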